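(* Let $G$ be a graph and $H$ a subgraph of $G$. If $G\in$ CBU then $H\in$ CBU. More precisely, if $K_{a,b}$ is a complete bipartite graph with $V(K_{a,b})\subseteq V(G)$, and $H$ is the graph on $V(G)$ with $E(H)=E(G)\setminus E(K_{a,b})$, then if $G$ belongs to $d$-CBU, $H$ belongs to $(d+1)$-CBU.
   Context: Let $e_1,\ldots,e_d$ be the standard basis of $\mathbb{R}^d$. For $d\ge 1$, a graph belongs to $d$-CBU if one can assign to each vertex an axis-parallel box (product of $d$ closed intervals of positive length) in $\mathbb{R}^d$ such that the boxes have pairwise disjoint interiors, two distinct vertices are adjacent iff their boxes intersect, and any two intersecting boxes intersect in a $(d-1)$-dimensional box orthogonal to $e_1$. CBU is the union of the classes $d$-CBU over all $d\ge1$. *)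

(* Defs.v *)
From mathcomp Require Import all_boot.
From Stdlib Require Import Reals.
Set Implicit Arguments. Unset Strict Implicit. Unset Printing Implicit Defensive.

(* A point of R^d is a function 'I_d -> R; coordinate i with val i = 0
   is the coordinate along e_1. *)
Definition point (d : nat) := 'I_d -> R.

Definition box (d : nat) (l u : point d) : point d -> Prop :=
  fun x => forall i, (l i <= x i <= u i)%R.

Definition box_interior (d : nat) (l u : point d) : point d -> Prop :=
  fun x => forall i, (l i < x i < u i)%R.

Definition orth_e1_box (d : nat) (c : R) (l' u' : point d) : point d -> Prop :=
  fun x => (forall i : 'I_d, val i = 0%N -> x i = c) /\
           (forall i : 'I_d, val i <> 0%N -> (l' i <= x i <= u' i)%R).

Definition dCBU (T : finType) (e : rel T) (d : nat) : Prop :=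
  (1 <= d)%N /\
  exists l u : T -> point d,
    (forall v i, (l v i < u v i)%R) /\
    (forall v w, v <> w -> forall x,
        ~ (box_interior (l v) (u v) x /\ box_interior (l w) (u w) x)) /\
    (forall v w, v <> w ->
        (e v w <-> exists x, box (l v) (u v) x /\ box (l w) (u w) x)) /\
    (forall v w, v <> w ->
        (exists x, box (l v) (u v) x /\ box (l w) (u w) x) ->
        exists (c : R) (l' u' : point d),
          (forall i : 'I_d, val i <> 0%N -> (l' i < u' i)%R) /\
          (forall x, (box (l v) (u v) x /\ box (l w) (u w) x) <->
                     orth_e1_box c l' u' x)).

Definition CBU (T : finType) (e : rel T) : Prop := exists d, dCBU e d.

Definition simple_graph (T : finType) (e : rel T) : Prop :=
  symmetric e /\ irreflexive e.

Definition remove_biclique (T : finType) (e : rel T) (A B : {set T}) : rel T :=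
  fun x y => e x y && ~~ (((x \in A) && (y \in B)) || ((x \in B) && (y \in A))).

(* Main.v *)
Require Import Defs.
From mathcomp Require Import all_boot.
From Stdlib Require Import Reals Lra.
From mathcomp Require Import zify.

Definition A0 (n:nat) : R := if n == 2 then 2%R else 0%R.
Definition B0 (n:nat) : R := if n == 1 then 1%R else 3%R.
Definition M0 (x y : nat) : R := if (x == 2) || (y == 2) then 2%R else 0%R.
Definition m0 (x y : nat) : R := if (x == 1) || (y == 1) then 1%R else 3%R.
Definition sep (x y : nat) : bool := ((x == 1) && (y == 2)) || ((x == 2) && (y == 1)).

Lemma L1 x : (A0 x < B0 x)%R.
Proof. rewrite /A0 /B0; case: x => [|[|[|x]]] /=; lra. Qed.
Lemma L2 x y : ~~ sep x y -> (M0 x y < m0 x y)%R.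
Proof. rewrite /M0 /m0 /sep; case: x => [|[|[|x]]]; case: y => [|[|[|y]]] //=; lra. Qed.
Lemma L3 x y z : (A0 x <= z <= B0 x)%R -> (A0 y <= z <= B0 y)%R -> ~~ sep x y.
Proof. rewrite /A0 /B0 /sep; case: x => [|[|[|x]]]; case: y => [|[|[|y]]] //=; lra. Qed.
Lemma L4 x y z : ((A0 x <= z <= B0 x) /\ (A0 y <= z <= B0 y))%R <-> (M0 x y <= z <= m0 x y)%R.
Proof. rewrite /A0 /B0 /M0 /m0; case: x => [|[|[|x]]]; case: y => [|[|[|y]]] //=; lra. Qed.
Lemma L5 x y : ~~ sep x y -> ((A0 x <= M0 x y <= B0 x) /\ (A0 y <= M0 x y <= B0 y))%R.
Proof. move=> h; apply/L4; have := L2 x y h; lra. Qed.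

Lemma ext (T U : finType) (e : rel T) (eH : rel U) (f : U -> T) (d D : nat)
  (c : U -> nat -> nat) :
  injective f -> (d <= D)%nat -> dCBU e d ->
  (forall v w, v <> w -> (eH v w <-> e (f v) (f w) /\
       forall j, (j < D - d)%nat -> ~~ sep (c v j) (c w j))) ->
  dCBU eH D.
Proof.
move=> finj leDd [d1 [l [u [Hlu [Hint [Hadj Horth]]]]]] HeH.
pose d0 : 'I_d := Ordinal d1.
pose cv (i : 'I_D) : 'I_d := insubd d0 (val i).
have cvE : forall i : 'I_D, (i < d)%nat -> val (cv i) = val i.
  by move=> i hi; rewrite /cv val_insubd hi.
pose wd (j : 'I_d) : 'I_D := widen_ord leDd j.
have cvwd : forall j, cv (wd j) = j.
  by move=> j; apply: val_inj; rewrite cvE /=.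
have wdcv : forall i : 'I_D, (i < d)%nat -> wd (cv i) = i.
  by move=> i hi; apply: val_inj; rewrite /= cvE.
pose L (v : U) (i:'I_D) := if (i < d)%nat then l (f v) (cv i) else A0 (c v (i - d)%nat).
pose Uu (v : U) (i:'I_D) := if (i < d)%nat then u (f v) (cv i) else B0 (c v (i - d)%nat).
have proj : forall v x, box (L v) (Uu v) x -> box (l (f v)) (u (f v)) (fun j => x (wd j)).
  by move=> v x H j; have := H (wd j); rewrite /L /Uu /= ltn_ord cvwd.
have extra : forall v x (i : 'I_D), box (L v) (Uu v) x -> ~~ (i < d)%nat ->
    (A0 (c v (i - d)%nat) <= x i <= B0 (c v (i - d)%nat))%R.
  by move=> v x i H hi; have := H i; rewrite /L /Uu (negbTE hi).
have lift : forall v x, box (l (f v)) (u (f v)) (fun j => x (wd j)) ->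
    (forall i : 'I_D, ~~ (i < d)%nat -> (A0 (c v (i - d)%nat) <= x i <= B0 (c v (i - d)%nat))%R) ->
    box (L v) (Uu v) x.
  move=> v x H H2 i; rewrite /L /Uu; case: ifP => hi.
    by have := H (cv i); rewrite wdcv.
  by apply: H2; rewrite hi.
have ovj : forall v w x j, box (L v) (Uu v) x -> box (L w) (Uu w) x ->
    (j < D - d)%nat -> ~~ sep (c v j) (c w j).
  move=> v w x j Xv Xw hj.
  have hjd : (j + d < D)%nat by lia.
  pose i : 'I_D := Ordinal hjd.
  have hi : ~~ (i < d)%nat by rewrite /= -leqNgt leq_addl.
  have := extra v x i Xv hi; have := extra w x i Xw hi.
  rewrite /= addnK => h1 h2; exact: L3 h2 h1.
split; first exact: leq_trans d1 leDd.
exists L, Uu; split; last split; last split.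
- by move=> v i; rewrite /L /Uu; case: ifP => _; [apply: Hlu | apply: L1].
- move=> v w vw x [Iv Iw].
  apply: (Hint (f v) (f w) _ (fun j => x (wd j))); first by move/finj.
  by split=> j; [have := Iv (wd j) | have := Iw (wd j)]; rewrite /L /Uu /= ltn_ord cvwd.
- move=> v w vw; have fvw : f v <> f w by move/finj.
  rewrite (HeH v w vw); split.
  + move=> [Ee Hs]; have [y [Yv Yw]] := (Hadj _ _ fvw).1 Ee.
    exists (fun i : 'I_D => if (i < d)%nat then y (cv i) else M0 (c v (i - d)%nat) (c w (i - d)%nat)).
    have Hs' : forall i : 'I_D, ~~ (i < d)%nat -> ~~ sep (c v (i - d)%nat) (c w (i - d)%nat).
      by move=> i hi; apply: Hs; have := ltn_ord i; move: hi; rewrite -leqNgt; lia.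
    split; apply: lift.
    * by move=> j /=; rewrite ltn_ord cvwd; apply: Yv.
    * by move=> i hi; rewrite (negbTE hi); have := L5 _ _ (Hs' i hi); case.
    * by move=> j /=; rewrite ltn_ord cvwd; apply: Yw.
    * by move=> i hi; rewrite (negbTE hi); have := L5 _ _ (Hs' i hi); case.
  + move=> [x [Xv Xw]]; split.
    * apply: (Hadj _ _ fvw).2; exists (fun j => x (wd j)); split; exact: proj.
    * by move=> j hj; apply: (ovj v w x).
- move=> v w vw [x [Xv Xw]]; have fvw : f v <> f w by move/finj.
  have [c0 [l' [u' [Hl'u' Hchar]]]] := Horth _ _ fvw
     (ex_intro _ (fun j => x (wd j)) (conj (proj _ _ Xv) (proj _ _ Xw))).
  exists c0, (fun i : 'I_D => if (i < d)%nat then l' (cv i) else M0 (c v (i - d)%nat) (c w (i - d)%nat)),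
    (fun i : 'I_D => if (i < d)%nat then u' (cv i) else m0 (c v (i - d)%nat) (c w (i - d)%nat)).
  split.
  + move=> i hi0; case: ifP => hid.
      by apply: Hl'u'; rewrite cvE.
    apply: L2; apply: (ovj v w x) => //; have := ltn_ord i; move: hid; lia.
  + move=> z; split.
    * move=> [Zv Zw].
      have [Z0 Z1] := (Hchar (fun j => z (wd j))).1 (conj (proj _ _ Zv) (proj _ _ Zw)).
      split.
      -- move=> i hi0; have hid : (i < d)%nat by rewrite hi0.
         by have := Z0 (cv i); rewrite wdcv // cvE //; apply.
      -- move=> i hi0; case: ifP => hid.
           by have := Z1 (cv i); rewrite wdcv // cvE //; apply.
         apply/L4; split; [apply: (extra v) | apply: (extra w)] => //; rewrite hid //.
    * move=> [Z0 Z1].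
      have Y : orth_e1_box c0 l' u' (fun j => z (wd j)).
        split.
          by move=> j hj; apply: Z0.
        by move=> j hj; have := Z1 (wd j) hj; rewrite /= ltn_ord cvwd.
      have [Yv Yw] := (Hchar _).2 Y.
      have Hx : forall i : 'I_D, ~~ (i < d)%nat -> (M0 (c v (i - d)%nat) (c w (i - d)%nat) <= z i <= m0 (c v (i - d)%nat) (c w (i - d)%nat))%R.
        move=> i hi; have hi0 : val i <> 0%nat by move=> h0; move: hi; rewrite h0 d1.
        by have := Z1 i hi0; rewrite (negbTE hi).
      split; apply: lift => // i hi; have := Hx i hi; move/L4; case.
        by [].
      by [].
Qed.
Theorem mainTheorem9 :
  (forall (T : finType) (e : rel T) (U : finType) (eH : rel U) (f : U -> T),
      simple_graph e -> simple_graph eH ->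
      injective f ->
      (forall x y, eH x y -> e (f x) (f y)) ->
      CBU e -> CBU eH) /\
  (forall (T : finType) (e : rel T) (A B : {set T}) (d : nat),
      simple_graph e ->
      (0 < #|A|)%N -> (0 < #|B|)%N -> [disjoint A & B] ->
      dCBU e d -> dCBU (remove_biclique e A B) d.+1).
Proof.
split.
- move=> T e U eH f _ [eHS _] finj Hedge [d HdC].
  pose s := [seq Some p | p <- enum [set: U * U]].
  pose c (v : U) (j : nat) : nat := match nth None s j with
    | Some (p, q) => if (p != q) && ~~ eH p q then
                       (if v == p then 1 else if v == q then 2 else 0) else 0
    | None => 0 end.
  exists (d + size s)%nat.
  apply: (@ext _ _ e eH f d _ c finj _ HdC); first exact: leq_addr.
  move=> v w vw; rewrite addKn; split.
  + move=> Hvw; split; first exact: Hedge.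
    move=> j _; rewrite /c; case: (nth None s j) => [[p q]|] //.
    case: ifP => // /andP [pq nE].
    have Hwv : eH w v by rewrite eHS.
    rewrite /sep.
    case: (v =P p) => [Ev|nv]; case: (w =P p) => [Ew|nw]; case: (v =P q) => [Fv|mv];
      case: (w =P q) => [Fw|mw] => //=; subst => //=;
      try (by case: vw); try (by rewrite eqxx in pq); try (by rewrite Hvw in nE); try (by rewrite Hwv in nE).
  + move=> [Ee Hs]; apply/negPn/negP => nE.
    have vs : Some (v, w) \in s by apply: map_f; rewrite mem_enum inE.
    have := Hs (index (Some (v, w)) s); rewrite index_mem => /(_ vs).
    rewrite /c nth_index // nE andbT eqxx.
    have -> : (v != w) by apply/eqP.
    by rewrite (_ : (w == v) = false) ?eqxx //; apply/eqP => h; apply: vw.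
- move=> T e A B d _ _ _ disAB HdC.
  apply: (@ext _ _ e (remove_biclique e A B) idfun d d.+1 (fun v _ => if v \in A then 1 else if v \in B then 2 else 0)
    (fun x y (h : idfun x = idfun y) => h) (leqnSn d) HdC).
  rewrite subSnn => v w vw.
  have dj : forall x, x \in A -> x \in B -> False.
    by move=> x xa xb; move: (disjointFr disAB xa); rewrite xb.
  have vAB : ~~ ((v \in A) && (v \in B)) by apply/negP => /andP [] /dj h /h.
  have wAB : ~~ ((w \in A) && (w \in B)) by apply/negP => /andP [] /dj h /h.
  rewrite /remove_biclique /=.
  move: vAB wAB; case: (v \in A); case: (v \in B); case: (w \in A); case: (w \in B) => //= _ _;
    rewrite ?andbT ?andbF; split; try (by move=> h; split => // j _);
    try (by case => h _); try (by move=> [h H]; have := H 0%nat isT).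
Qed.
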